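(* Let $k\geq 3$ be an integer and $\ell\geq 2$ an even integer, and let $G_1^{\{\ell,k\}}$ and $G_2^{\{\ell,k\}}$ be the indistinguishability graphs (for a fixed permutation $\sigma\neq\mathrm{id}$ of $[k]$), with vertices labeled by their names as defined below. Then for every $i\in[k]$ and every $v\in\{(i,1),(i,\ell)\}$, $$N^{3(\ell/2-1)}_{G_1^{\{\ell,k\}}}[v]=N^{3(\ell/2-1)}_{G_2^{\{\ell,k\}}}[v],$$ i.e. the subgraphs induced by the vertices at distance at most $3(\ell/2-1)$ from $v$ coincide (as labeled graphs) in the two graphs.
   Context: Let $[m]=\{1,\dots,m\}$. For a graph $H$, vertex $v$ and $t\geq 0$, $N^t_H[v]$ denotes the subgraph of $H$ induced by $\{u\in V(H):\mathrm{dist}_H(u,v)\leq t\}$. Path of cliques: for permutations $\tau_1,\dots,\tau_{\ell-1}$ of $[k]$, $P(\tau_1,\dots,\tau_{\ell-1})$ has vertex set $[k]\times[\ell]$ and edges $\{(a,i),(b,i)\}$ for $a\neq b$, $i\in[\ell]$, and $\{(a,i),(b,i+1)\}$ for $i\in[\ell-1]$, $a,b\in[k]$, $b\neq\tau_i(a)$. The $k$-edge-gadget transformation: given a graph $G$ and for each edge a chosen ordered pair $(u,v)$, keep all vertices of $G$, delete each edge $\{u,v\}$, and add $k$ new vertices named $(u,v,1),\dots,(u,v,k)$ forming a clique together with edges $\{u,(u,v,j)\}$ for $j=1,\dots,k-1$ and $\{v,(u,v,k)\}$. Indistinguishability graphs: let $G_1=P(\tau_1,\dots,\tau_{\ell-1})$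 with all $\tau_i=\mathrm{id}$, and $G_2=P(\tau_1',\dots,\tau_{\ell-1}')$ with $\tau_i'=\mathrm{id}$ for $i\neq \ell/2$ and $\tau'_{\ell/2}=\sigma$, where $\sigma$ is a fixed permutation of $[k]$ different from the identity. $G_1^{\{\ell,k\}}$ (resp. $G_2^{\{\ell,k\}}$) is obtained from $G_1$ (resp. $G_2$) by the $k$-edge-gadget transformation, where an edge $\{(a,i),(b,i)\}$ with $a<b$ is oriented as $((a,i),(b,i))$ and an edge $\{(a,i),(b,i+1)\}$ is oriented as $((a,i),(b,i+1))$; vertices are labeled by these names ($(a,i)$ for original vertices, $(u,v,j)$ for gadget vertices). *)

(* Defs.v *)
From mathcomp Require Import all_boot all_fingroup.
Set Implicit Arguments. Unset Strict Implicit. Unset Printing Implicit Defensive.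

(* Vertex names: Orig a i is the original vertex (a,i);
   Gad a i b j m is the gadget vertex ((a,i),(b,j),m). *)
Inductive vtx : Type :=
  | Orig of nat & nat
  | Gad of nat & nat & nat & nat & nat.

Record graph := Graph { vert : vtx -> Prop ; adj : vtx -> vtx -> Prop }.

Inductive walk (G : graph) : nat -> vtx -> vtx -> Prop :=
  | walk0 v : vert G v -> walk G 0 v v
  | walkS n v u w : walk G n v u -> adj G u w -> vert G w -> walk G n.+1 v w.

Definition in_ball (G : graph) (t : nat) (v u : vtx) : Prop :=
  exists2 n, n <= t & walk G n v u.

Definition ball_eq (G1 G2 : graph) (t : nat) (v : vtx) : Prop :=
  (forall u, in_ball G1 t v u <-> in_ball G2 t v u) /\
  (forall u w, in_ball G1 t v u -> in_ball G1 t v w -> (adj G1 u w <-> adj G2 u w)).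

Definition pc_vert (k l : nat) (a i : nat) : Prop :=
  0 < a <= k /\ 0 < i <= l.

(* Oriented edges ((a,i),(b,j)) of P(tau_1,...,tau_{l-1}); tau i is tau_i on [k] *)
Definition pc_oedge (k l : nat) (tau : nat -> nat -> nat) (a i b j : nat) : Prop :=
  pc_vert k l a i /\ pc_vert k l b j /\
  ((j = i /\ a < b) \/ (j = i.+1 /\ b <> tau i a)).

Definition gad_vert (k l : nat) (tau : nat -> nat -> nat) (x : vtx) : Prop :=
  match x with
  | Orig a i => pc_vert k l a i
  | Gad a i b j m => pc_oedge k l tau a i b j /\ 0 < m <= k
  end.

Definition gad_adj0 (k l : nat) (tau : nat -> nat -> nat) (x y : vtx) : Prop :=
  match x, y with
  | Gad a i b j m, Gad a' i' b' j' m' =>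
      a' = a /\ i' = i /\ b' = b /\ j' = j /\ m <> m'
  | Orig c p, Gad a i b j m =>
      (c = a /\ p = i /\ 0 < m <= k.-1) \/ (c = b /\ p = j /\ m = k)
  | _, _ => False
  end.

Definition gadget_graph (k l : nat) (tau : nat -> nat -> nat) : graph :=
  Graph (gad_vert k l tau)
    (fun x y => gad_vert k l tau x /\ gad_vert k l tau y /\
                (gad_adj0 k l tau x y \/ gad_adj0 k l tau y x)).

(* a permutation of 'I_k viewed as a permutation of [k] = {1..k} *)
Definition perm_nat (k : nat) (s : {perm 'I_k}) (a : nat) : nat :=
  match @insub nat (fun x => x < k) 'I_k a.-1 with
  | Some x => (val (s x)).+1
  | None => a
  end.

Definition tau_id : nat -> nat -> nat := fun _ a => a.

Definition tau_sigma (k l : nat) (s : {perm 'I_k}) : nat -> nat -> nat :=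
  fun i a => if i == l./2 then perm_nat s a else a.

Definition G1 (k l : nat) : graph := gadget_graph k l tau_id.
Definition G2 (k l : nat) (s : {perm 'I_k}) : graph := gadget_graph k l (tau_sigma l s).

(* Main.v *)
Require Import Defs.
From mathcomp Require Import all_boot all_fingroup.
From mathcomp Require Import zify.

Definition phi (k : nat) (x : vtx) : nat :=
  match x with
  | Orig a i => 3 * i
  | Gad a i b j m => if j == i.+1 then (if m == k then 3 * i + 2 else 3 * i + 1)
                     else 3 * i + 1
  end.

Lemma lip k l tau u w : adj (gadget_graph k l tau) u w ->
  phi k u <= phi k w + 1 /\ phi k w <= phi k u + 1.
Proof.
case=> Hu [Hw Hadj].
case: u Hu Hadj => [c p|a i b j m]; case: w Hw => [c' p'|a' i' b' j' m'] /=;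
  rewrite /pc_oedge /pc_vert.
- by move=> _ _ [].
- move=> [[_ [_ Hj]] Hm] _ [|[]//].
  case=> [[? [? Hm']]|[? [? ?]]]; subst; case: eqP => Hji //=;
   rewrite ?eqxx; try (case: eqP => ?); lia.
- move=> _ [[_ [_ Hj]] Hm] [[]//|].
  case=> [[? [? Hm']]|[? [? ?]]]; subst; case: eqP => Hji //=;
   rewrite ?eqxx; try (case: eqP => ?); lia.
- move=> _ _ [[? [? [? [? Hmm]]]]|[? [? [? [? Hmm]]]]]; subst;
  by repeat (case: ifP => _); lia.
Qed.

Lemma walk_phi k l tau n v u : walk (gadget_graph k l tau) n v u ->
  phi k u <= phi k v + n /\ phi k v <= phi k u + n.
Proof.
elim=> [x _|n' x y z _ [IH1 IH2] Ha _]; first lia.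
have := @lip _ _ _ _ _ Ha; lia.
Qed.

Definition good k v t x := phi k x <= phi k v + t /\ phi k v <= phi k x + t.

Lemma transfer k l tau1 tau2 v t :
  (forall x, good k v t x -> gad_vert k l tau1 x <-> gad_vert k l tau2 x) ->
  forall n x u, walk (gadget_graph k l tau1) n x u -> x = v -> n <= t ->
  walk (gadget_graph k l tau2) n x u.
Proof.
move=> Hg n x u; elim=> [y Hy|n' y y' z W IH Ha Hz] Ev Hn; subst y.
  by apply: walk0; apply/(Hg v) => //; rewrite /good; lia.
have W' : walk (gadget_graph k l tau1) n'.+1 v z by apply: walkS W Ha Hz.
have [? ?] := @walk_phi _ _ _ _ _ _ W; have [? ?] := @walk_phi _ _ _ _ _ _ W'.
have gy : good k v t y' by rewrite /good; lia.
have gz : good k v t z by rewrite /good; lia.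
apply: walkS (IH erefl (ltnW Hn)) _ _.
  case: Ha => Hy [Hz' H]; split; first by apply/(Hg y').
  by split; first by apply/(Hg z).
by apply/(Hg z).
Qed.

Lemma vert_eq k l (s : {perm 'I_k}) v t x :
  (forall a b m, ~ good k v t (Gad a l./2 b (l./2).+1 m)) ->
  good k v t x -> gad_vert k l tau_id x <-> gad_vert k l (tau_sigma l s) x.
Proof.
move=> Hbad Hx; case: x Hx => [a i|a i b j m] Hx //=.
rewrite /pc_oedge /tau_sigma /tau_id.
case: (eqVneq i l./2) => [Ei|Ni].
  case: (eqVneq j i.+1) => [Ej|Nj].
    by exfalso; apply: (Hbad a b m); rewrite -Ei -Ej.
  split=> -[[H1 [H2 [H3|[H4 H5]]]] H6]; (split; [split; [done|split; [done|]]|done]);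
   (try by left); by rewrite H4 eqxx in Nj.
by [].
Qed.

Theorem fact2 (k l : nat) (s : {perm 'I_k}) :
  3 <= k -> 2 <= l -> ~~ odd l -> s != 1%g ->
  forall i v, 0 < i <= k -> (v = Orig i 1 \/ v = Orig i l) ->
    ball_eq (G1 k l) (G2 l s) (3 * (l./2 - 1)) v.
Proof.
move=> Hk Hl Hodd Hs i v Hi Hv.
rewrite /G1 /G2.
set t := 3 * (l./2 - 1).
have Ll : l = l./2 * 2.
  have := odd_double_half l; rewrite (negbTE Hodd) -muln2 /=; lia.
have Hbad : forall a b m, ~ good k v t (Gad a l./2 b l./2.+1 m).
  move=> a b m; rewrite /good /= eqxx /t.
  by case: Hv => -> /=; case: eqP => _; lia.
have HV x (gx : good k v t x) := @vert_eq k l s v t x Hbad gx.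
split.
- move=> u; split=> -[n Hn W]; exists n => //.
    exact: (@transfer _ _ _ _ _ _ HV _ _ _ W erefl Hn).
  apply: (@transfer _ _ _ _ _ _ _ _ _ _ W erefl Hn) => x gx; exact: iff_sym (HV x gx).
- move=> u w [n Hn W] [n' Hn' W'].
  have [? ?] := @walk_phi _ _ _ _ _ _ W; have [? ?] := @walk_phi _ _ _ _ _ _ W'.
  have gu : good k v t u by rewrite /good; lia.
  have gw : good k v t w by rewrite /good; lia.
  split=> -[Hu [Hw H]]; split.
  + by apply/(HV u).
  + by split; first by apply/(HV w).
  + by apply/(HV u).
  + by split; first by apply/(HV w).
Qed.
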